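(* Let $1\le k\le n$, let $Q$ be a symmetric $n\times n$ matrix with entries in $[0,1]$ and zero diagonal, and let $A=\mathrm{Bern}(Q)$. Let $\varepsilon=\max_{\pi:[n]\to[k]}\|A_\pi-Q_\pi\|_1$. Then \[ \mathbb E[\varepsilon]\le9\sqrt{\rho(Q)\Big(\frac{1+\log k}{n}+\frac{k^2}{n^2}\Big)}, \] and if $n\rho(Q)\ge1$, then with probability at least $1-e^{-n}$, \[ \varepsilon\le8\sqrt{\rho(Q)\Big(\frac{1+\log k}{n}+\frac{k^2}{n^2}\Big)}. \]
   Context: $\mathrm{Bern}(Q)$ is the random symmetric $\{0,1\}$-matrix with $A_{ij}=A_{ji}=1$ with probability $Q_{ij}$ independently for $i<j$ and $A_{ii}=0$. For an $n\times n$ matrix $H$: $\|H\|_1=\frac1{n^2}\sum_{i,j}|H_{ij}|$ and $\rho(H)=\frac1{n^2}\sum_{i,j}H_{ij}$. For $\pi:[n]\to[k]$ with classes $V_i=\pi^{-1}(i)$, $H_\pi$ is the $n\times n$ matrix whose entry at $(u,v)\in V_i\times V_j$ is the average $\frac1{|V_i||V_j|}\sum_{(a,b)\in V_i\times V_j}H_{ab}$. *)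

(* Defs.v *)
From HB Require Import structures.
From mathcomp Require Import all_boot all_order all_algebra.
From mathcomp Require Import reals.
From mathcomp.analysis Require Import sequences exp.
Set Implicit Arguments. Unset Strict Implicit. Unset Printing Implicit Defensive.
Import Order.TTheory GRing.Theory Num.Theory.
Local Open Scope ring_scope.

Section Defs.
Variable R : realType.

(* Sample space: one bit per ordered pair; only pairs (i,j) with i<j are
   random (independent Bernoulli(Q i j)); other bits are forced to false
   (weight 0 otherwise), so the total mass is 1. *)
Definition bern_weight (n : nat) (Q : 'M[R]_n) (w : {ffun 'I_n * 'I_n -> bool}) : R :=
  \prod_(p : 'I_n * 'I_n)
     (if (p.1 < p.2)%N then (if w p then Q p.1 p.2 else 1 - Q p.1 p.2)
      else (if w p then 0 else 1)).

Definition bern_mx (n : nat) (w : {ffun 'I_n * 'I_n -> bool}) : 'M[R]_n :=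
  \matrix_(i, j) (if (i < j)%N then (w (i, j))%:R
                  else if (j < i)%N then (w (j, i))%:R else 0).

Definition bern_E (n : nat) (Q : 'M[R]_n) (f : 'M[R]_n -> R) : R :=
  \sum_(w : {ffun 'I_n * 'I_n -> bool}) bern_weight Q w * f (bern_mx w).

Definition bern_P (n : nat) (Q : 'M[R]_n) (P : 'M[R]_n -> bool) : R :=
  \sum_(w : {ffun 'I_n * 'I_n -> bool} | P (bern_mx w)) bern_weight Q w.

Definition norm1 (n : nat) (H : 'M[R]_n) : R :=
  (n%:R ^+ 2)^-1 * \sum_(i < n) \sum_(j < n) `|H i j|.

Definition rho (n : nat) (H : 'M[R]_n) : R :=
  (n%:R ^+ 2)^-1 * \sum_(i < n) \sum_(j < n) H i j.

Definition blockavg (n k : nat) (H : 'M[R]_n) (pi : {ffun 'I_n -> 'I_k}) : 'M[R]_n :=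
  \matrix_(u, v)
    ((\sum_(a : 'I_n | pi a == pi u) \sum_(b : 'I_n | pi b == pi v) H a b)
     / (#|[set a : 'I_n | pi a == pi u]| * #|[set b : 'I_n | pi b == pi v]|)%:R).

(* eps(A) = max over pi : [n] -> [k] of ||A_pi - Q_pi||_1 (all terms are >= 0,
   so 0 is a neutral start for the max). *)
Definition cut_eps (n k : nat) (Q A : 'M[R]_n) : R :=
  \big[Num.max/0]_(pi : {ffun 'I_n -> 'I_k}) norm1 (blockavg A pi - blockavg Q pi).

End Defs.

(* Main.v *)
Require Import Defs.
From HB Require Import structures.
From mathcomp Require Import all_boot all_order all_algebra.
From mathcomp Require Import reals.
From mathcomp.analysis Require Import sequences exp.
From mathcomp Require Import ring lra.
Import Order.TTheory GRing.Theory Num.Theory.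
Local Open Scope ring_scope.
Set Implicit Arguments. Unset Strict Implicit. Unset Printing Implicit Defensive.

Section Scal.
Context {R : realType}.

Lemma exp_le2 (x : R) : x <= 1/2 -> expR x <= 1 + x + 2 * x^+2.
Proof.
move=> hx.
have h1 : 1 - x <= expR (- x) by have := expR_ge1Dx (- x).
have hp : 0 < 1 - x by lra.
have -> : expR x = (expR (- x))^-1 by rewrite expRN invrK.
apply: (@le_trans _ _ ((1 - x)^-1)).
  by rewrite lef_pV2 ?posrE ?expR_gt0.
rewrite -[(1 - x)^-1]mulr1 ler_pdivrMl //.
have h2 : 0 <= x^+2 * (1 - 2 * x) by apply: mulr_ge0; [exact: sqr_ge0| lra].
nra.
Qed.

Lemma mgf1 (q mu : R) : 0 <= q <= 1 -> mu <= 1/2 ->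
  (1 - q) * expR (- (mu * q)) + q * expR (mu * (1 - q)) <= expR (2 * mu^+2 * q).
Proof.
move=> /andP[q0 q1] hmu.
have -> : expR (mu * (1 - q)) = expR (- (mu * q)) * expR mu by rewrite -expRD; congr expR; ring.
have e := @exp_le2 mu hmu.
have -> : (1 - q) * expR (- (mu * q)) + q * (expR (- (mu * q)) * expR mu)
   = expR (- (mu * q)) * (1 + q * (expR mu - 1)) by ring.
have h3 : 1 + q * (expR mu - 1) <= expR (q * (mu + 2 * mu^+2)).
  apply: le_trans (expR_ge1Dx _).
  have : q * (expR mu - 1) <= q * (mu + 2 * mu^+2) by apply: ler_wpM2l => //; lra.
  lra.
apply: le_trans (ler_wpM2l (expR_ge0 _) h3) _.
by rewrite -expRD ler_expR; nra.
Qed.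
End Scal.

Section Prob.
Context {R : realType} (n : nat) (Q : 'M[R]_n).
Hypothesis hsym : Q^T = Q.
Hypothesis hQ01 : forall i j, 0 <= Q i j <= 1.
Hypothesis hdiag : forall i, Q i i = 0.

Local Notation W := {ffun 'I_n * 'I_n -> bool}.

Definition fac (p : 'I_n * 'I_n) (b : bool) : R :=
  if (p.1 < p.2)%N then (if b then Q p.1 p.2 else 1 - Q p.1 p.2)
  else (if b then 0 else 1).

Lemma Qsym i j : Q j i = Q i j.
Proof. by have := congr1 (fun M : 'M[R]_n => M i j) hsym; rewrite mxE. Qed.

Lemma fac_ge0 p b : 0 <= fac p b.
Proof.
rewrite /fac; have /andP[h0 h1] := hQ01 p.1 p.2.
by case: ifP; case: b => //; rewrite subr_ge0.
Qed.

Lemma factorize (f : 'I_n * 'I_n -> bool -> R) :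
  \sum_(w : W) bern_weight Q w * \prod_p f p (w p) =
  \prod_p \sum_(b : bool) fac p b * f p b.
Proof.
rewrite bigA_distr_bigA; apply: eq_bigr => w _.
by rewrite /bern_weight -big_split.
Qed.

Lemma weight_ge0 (w : W) : 0 <= bern_weight Q w.
Proof. by apply: prodr_ge0 => p _; exact: fac_ge0. Qed.

Lemma weight_sum1 : \sum_(w : W) bern_weight Q w = 1.
Proof.
transitivity (\sum_(w : W) bern_weight Q w * \prod_p (fun _ _ => 1 : R) p (w p)).
  by apply: eq_bigr => w _; rewrite big1 ?mulr1.
rewrite (factorize (fun _ _ => 1)); apply: big1 => p _.
by rewrite big_bool /= !mulr1 /fac; case: ifP => _; rewrite ?addr0 ?add0r ?subrKC.
Qed.

Lemma sum_pairs (F : 'I_n -> 'I_n -> R) :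
  \sum_a \sum_b F a b = \sum_(p : 'I_n * 'I_n)
    (if (p.1 < p.2)%N then F p.1 p.2 + F p.2 p.1
     else if p.1 == p.2 then F p.1 p.2 else 0).
Proof.
rewrite pair_bigA /=.
have e1 : \sum_(p : 'I_n * 'I_n) F p.1 p.2 =
  \sum_(p : 'I_n * 'I_n) ((if (p.1 < p.2)%N then F p.1 p.2 else 0) +
     (if (p.2 < p.1)%N then F p.1 p.2 else 0) + (if p.1 == p.2 then F p.1 p.2 else 0)).
  apply: eq_bigr => [[a b]] _ /=.
  case: (ltngtP a b) => h.
  - have /negPf -> : a != b by apply/eqP => e; rewrite e ltnn in h.
    by rewrite !addr0.
  - have /negPf -> : a != b by apply/eqP => e; rewrite e ltnn in h.
    by rewrite addr0 add0r.
  - have e : a = b by apply: val_inj.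
    by rewrite e eqxx !add0r.
rewrite e1.
have e2 : \sum_(p : 'I_n * 'I_n)
    (if (p.1 < p.2)%N then F p.1 p.2 + F p.2 p.1
     else if p.1 == p.2 then F p.1 p.2 else 0) =
  \sum_(p : 'I_n * 'I_n) ((if (p.1 < p.2)%N then F p.1 p.2 else 0) +
     (if (p.1 < p.2)%N then F p.2 p.1 else 0) + (if p.1 == p.2 then F p.1 p.2 else 0)).
  apply: eq_bigr => [[a b]] _ /=.
  case: (ltngtP a b) => h.
  - have /negPf -> : a != b by apply/eqP => e; rewrite e ltnn in h.
    by rewrite !addr0.
  - have /negPf -> : a != b by apply/eqP => e; rewrite e ltnn in h.
    by rewrite !addr0.
  - have e : a = b by apply: val_inj.
    by rewrite e eqxx !add0r.
rewrite e2 !big_split /=; congr (_ + _ + _).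
have sw : injective (fun p : 'I_n * 'I_n => (p.2, p.1)) by move=> [? ?] [? ?] [-> ->].
by rewrite (reindex_inj sw).
Qed.

Definition Lc (c A : 'M[R]_n) : R := \sum_a \sum_b c a b * (A a b - Q a b).

Definition gst (c : 'M[R]_n) (p : 'I_n * 'I_n) (b : bool) : R :=
  if (p.1 < p.2)%N then (c p.1 p.2 + c p.2 p.1) * (b%:R - Q p.1 p.2) else 0.

Lemma Lc_pairs c (w : W) : Lc c (bern_mx R w) = \sum_p gst c p (w p).
Proof.
rewrite /Lc sum_pairs; apply: eq_bigr => [[a b]] _ /=.
rewrite /gst /= !mxE.
case: (ltngtP a b) => h.
- by rewrite (Qsym a b); ring.
- by have /negPf -> : a != b by apply/eqP => e; rewrite e ltnn in h.
- have e : a = b by apply: val_inj.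
  by rewrite e eqxx hdiag subrr mulr0.
Qed.

Lemma sumQ_pairs : \sum_a \sum_b Q a b =
   \sum_(p : 'I_n * 'I_n) (if (p.1 < p.2)%N then 2 * Q p.1 p.2 else 0).
Proof.
rewrite sum_pairs; apply: eq_bigr => [[a b]] _ /=.
case: ifP => _; first by rewrite (Qsym a b); ring.
by case: eqP => // ->; rewrite hdiag.
Qed.

Lemma mgf (c : 'M[R]_n) (lam : R) : (forall a b, `|c a b| <= 1) -> 0 <= lam <= 1/4 ->
  \sum_(w : W) bern_weight Q w * expR (lam * Lc c (bern_mx R w)) <=
  expR (4 * lam^+2 * \sum_a \sum_b Q a b).
Proof.
move=> hc /andP[l0 l1].
have -> : \sum_(w : W) bern_weight Q w * expR (lam * Lc c (bern_mx R w)) =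
   \sum_(w : W) bern_weight Q w * \prod_p (fun p b => expR (lam * gst c p b)) p (w p).
  by apply: eq_bigr => w _; rewrite Lc_pairs mulr_sumr expR_sum.
rewrite (factorize (fun p b => expR (lam * gst c p b))) sumQ_pairs mulr_sumr expR_sum.
apply: ler_prod => p _; apply/andP; split.
  by apply: sumr_ge0 => b _; apply: mulr_ge0; [exact: fac_ge0 | exact: expR_ge0].
rewrite big_bool /fac /gst /=.
case: ifP => _; last by rewrite mul0r add0r mul1r !mulr0 expR0.
set t := c p.1 p.2 + c p.2 p.1.
set q := Q p.1 p.2.
have ht : `|t| <= 2.
  apply: le_trans (ler_normD _ _) _; have := hc p.1 p.2; have := hc p.2 p.1; lra.
have hmu : lam * t <= 1/2.
  apply: le_trans (ler_norm _) _; rewrite normrM (ger0_norm l0).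
  have : lam * `|t| <= 1/4 * 2 by apply: ler_pM => //.
  lra.
have := @mgf1 _ q (lam * t) (hQ01 p.1 p.2) hmu.
rewrite -/q.
have -> : (1 - q) * expR (- (lam * t * q)) + q * expR (lam * t * (1 - q)) =
   q * expR (lam * ((t * (1%:R - q)))) + (1 - q) * expR (lam * (t * (0%:R - q))).
  by rewrite addrC; congr (_ * expR _ + _ * expR _); ring.
move=> h; apply: le_trans h _; rewrite ler_expR.
have hq : 0 <= q by have /andP[] := hQ01 p.1 p.2.
have ht2 : t^+2 <= 4.
  rewrite -real_normK ?num_real //; have n0 := normr_ge0 t.
  nra.
have : lam^+2 * t^+2 * q <= lam^+2 * 4 * q.
  by apply: ler_wpM2r => //; apply: ler_wpM2l => //; exact: sqr_ge0.
nra.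
Qed.

End Prob.
Section Block.
Context {R : realType} (n k : nat) (pi : {ffun 'I_n -> 'I_k}).

Definition mk (i : 'I_k) : R := #|[set x : 'I_n | pi x == i]|%:R.

Definition BS (F : 'I_n -> 'I_n -> R) (u v : 'I_n) : R :=
  \sum_(a : 'I_n | pi a == pi u) \sum_(b : 'I_n | pi b == pi v) F a b.

Lemma mk_gt0 a : 0 < mk (pi a).
Proof. by rewrite /mk ltr0n; apply/card_gt0P; exists a; rewrite inE. Qed.

Lemma card_cls a : #|(fun u : 'I_n => pi u == pi a)|%:R = mk (pi a) :> R.
Proof. by rewrite /mk; congr (_%:R); apply: eq_card => x; rewrite inE. Qed.

Lemma block_swap (h : 'I_k -> 'I_k -> R) (F : 'I_n -> 'I_n -> R) :
  \sum_u \sum_v h (pi u) (pi v) * (BS F u v / (mk (pi u) * mk (pi v))) =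
  \sum_a \sum_b h (pi a) (pi b) * F a b.
Proof.
have step1 : forall u v, h (pi u) (pi v) * (BS F u v / (mk (pi u) * mk (pi v))) =
   \sum_a \sum_b (if (pi u == pi a) && (pi v == pi b) then
      h (pi a) (pi b) * F a b / (mk (pi a) * mk (pi b)) else 0).
  move=> u v; rewrite /BS mulr_suml mulr_sumr big_mkcond /=; apply: eq_bigr => a _.
  rewrite eq_sym; case: eqP => hu; last by rewrite /= big1 // => b _; rewrite mul0r mulr0.
  rewrite mulr_suml mulr_sumr big_mkcond /=; apply: eq_bigr => b _.
  rewrite eq_sym; case: eqP => hv /=; last by rewrite /= ?mul0r ?mulr0.
  by rewrite -hu -hv mulrA.
under eq_bigr do under eq_bigr do rewrite step1.
under eq_bigr do rewrite exchange_big.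
rewrite exchange_big.
under eq_bigr do under eq_bigr do rewrite exchange_big.
under eq_bigr do rewrite exchange_big.
apply: eq_bigr => a _; apply: eq_bigr => b _.
have e : forall u, \sum_v (if (pi u == pi a) && (pi v == pi b) then
      h (pi a) (pi b) * F a b / (mk (pi a) * mk (pi b)) else 0) =
   (if pi u == pi a then h (pi a) (pi b) * F a b / mk (pi a) else 0).
  move=> u; case: eqP => _ /=; last by rewrite big1.
  rewrite -big_mkcond sumr_const -mulr_natr card_cls.
  have := mk_gt0 b; have := mk_gt0 a; move=> ha hb.
  field; rewrite ?gt_eqF //.
under eq_bigr do rewrite e.
rewrite -big_mkcond sumr_const -mulr_natr card_cls.
have := mk_gt0 a => ha.
field; rewrite ?gt_eqF //.
Qed.

Lemma blockavg_entry (A : 'M[R]_n) u v :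
  blockavg A pi u v = BS (fun a b => A a b) u v / (mk (pi u) * mk (pi v)).
Proof. by rewrite /blockavg mxE natrM. Qed.

Definition sstar (A Q : 'M[R]_n) : {ffun 'I_k * 'I_k -> bool} :=
  [ffun ij => 0 <= \sum_(a : 'I_n | pi a == ij.1) \sum_(b : 'I_n | pi b == ij.2) (A a b - Q a b)].

Lemma diff_entry (A Q : 'M[R]_n) u v :
  (blockavg A pi - blockavg Q pi) u v =
  BS (fun a b => A a b - Q a b) u v / (mk (pi u) * mk (pi v)).
Proof.
have -> : (blockavg A pi - blockavg Q pi) u v = blockavg A pi u v - blockavg Q pi u v.
  by rewrite !mxE.
rewrite !blockavg_entry -mulrBl; congr (_ / _).
rewrite /BS -sumrB; apply: eq_bigr => a _; by rewrite -sumrB.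
Qed.

Lemma block_abs (A Q : 'M[R]_n) :
  \sum_u \sum_v `|(blockavg A pi - blockavg Q pi) u v| =
  \sum_a \sum_b (if sstar A Q (pi a, pi b) then 1 else -1) * (A a b - Q a b).
Proof.
rewrite -(block_swap (fun i j => if sstar A Q (i, j) then 1 else -1) (fun a b => A a b - Q a b)).
apply: eq_bigr => u _; apply: eq_bigr => v _.
rewrite diff_entry ffunE /=.
have hd : 0 < mk (pi u) * mk (pi v) by apply: mulr_gt0; apply: mk_gt0.
case: ifP => h.
  by rewrite mul1r ger0_norm // divr_ge0 // ltW.
rewrite ler0_norm ?mulN1r //.
rewrite pmulr_lle0 ?invr_gt0 //.
by apply: ltW; rewrite ltNge h.
Qed.

Lemma block_le (A Q : 'M[R]_n) :
  \sum_u \sum_v `|(blockavg A pi - blockavg Q pi) u v| <=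
  \sum_a \sum_b `|A a b - Q a b|.
Proof.
have e : \sum_a \sum_b `|A a b - Q a b| =
  \sum_a \sum_b (fun _ _ => 1 : R) (pi a) (pi b) * `|A a b - Q a b|.
  by apply: eq_bigr => a _; apply: eq_bigr => b _; rewrite mul1r.
rewrite e -(block_swap (fun _ _ => 1) (fun a b => `|A a b - Q a b|)).
apply: ler_sum => u _; apply: ler_sum => v _.
rewrite diff_entry mul1r.
have hd : 0 < mk (pi u) * mk (pi v) by apply: mulr_gt0; apply: mk_gt0.
rewrite normrM (gtr0_norm (x := (mk (pi u) * mk (pi v))^-1)); last by rewrite invr_gt0.
apply: ler_wpM2r; first by rewrite ltW ?invr_gt0.
apply: le_trans (ler_norm_sum _ _ _) _; apply: ler_sum => a _.
exact: ler_norm_sum.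
Qed.
End Block.
Section Det.
Context {R : realType} (n k : nat) (Q : 'M[R]_n).
Hypothesis hQ01 : forall i j, 0 <= Q i j <= 1.
Hypothesis hn : (0 < n)%N.

Definition cm (pi : {ffun 'I_n -> 'I_k}) (sg : {ffun 'I_k * 'I_k -> bool}) : 'M[R]_n :=
  \matrix_(a, b) (if sg (pi a, pi b) then 1 else -1).

Definition ones : 'M[R]_n := \matrix_(a, b) 1.

Lemma cm_bound pi sg a b : `|cm pi sg a b| <= 1.
Proof. by rewrite mxE; case: ifP; rewrite ?normrN normr1. Qed.

Lemma ones_bound a b : `|ones a b| <= 1.
Proof. by rewrite mxE normr1. Qed.

Lemma bern01 (w : {ffun 'I_n * 'I_n -> bool}) a b : 0 <= bern_mx R w a b <= 1.
Proof.
rewrite mxE; case: ifP => _; first by case: (w _); rewrite /= ?mulr1n ?mulr0n ?lexx ?ler01.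
by case: ifP => _; [case: (w _); rewrite /= ?mulr1n ?mulr0n ?lexx ?ler01|rewrite lexx ler01].
Qed.

Lemma Nsq_gt0 : 0 < (n%:R : R) ^+ 2.
Proof. by rewrite exprn_gt0 // ltr0n. Qed.

Lemma norm_eq (A : 'M[R]_n) (pi : {ffun 'I_n -> 'I_k}) :
  (n%:R : R) ^+ 2 * norm1 (blockavg A pi - blockavg Q pi) = Lc Q (cm pi (sstar pi A Q)) A.
Proof.
rewrite /norm1 mulrA mulfV ?gt_eqF ?Nsq_gt0 // mul1r block_abs /Lc.
by apply: eq_bigr => a _; apply: eq_bigr => b _; rewrite mxE.
Qed.

Lemma norm_le (A : 'M[R]_n) (pi : {ffun 'I_n -> 'I_k}) :
  (n%:R : R) ^+ 2 * norm1 (blockavg A pi - blockavg Q pi) <= \sum_a \sum_b `|A a b - Q a b|.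
Proof.
by rewrite /norm1 mulrA mulfV ?gt_eqF ?Nsq_gt0 // mul1r block_le.
Qed.

Lemma bigmax_le (I : finType) (f : I -> R) y :
  0 <= y -> (forall i, f i <= y) -> \big[Num.max/0]_i f i <= y.
Proof. by move=> y0 h; elim/big_ind: _ => // a b ha hb; rewrite ge_max ha hb. Qed.

Lemma eps_le1 w : cut_eps k Q (bern_mx R w) <= 1.
Proof.
apply: bigmax_le => // pi.
rewrite -(@ler_pM2l _ ((n%:R : R) ^+ 2)) ?Nsq_gt0 // mulr1.
apply: le_trans (norm_le _ _) _.
have -> : (n%:R : R) ^+ 2 = \sum_(a : 'I_n) \sum_(b : 'I_n) 1.
  by rewrite !sumr_const card_ord -mulr_natr expr2 !mul1r mulr_natr.
apply: ler_sum => a _; apply: ler_sum => b _.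
have := bern01 w a b; have := hQ01 a b.
move=> /andP[q0 q1] /andP[a0 a1].
by rewrite ler_norml; apply/andP; split; lra.
Qed.

Lemma eps_lin w : (n%:R : R) ^+ 2 * cut_eps k Q (bern_mx R w) <=
   Lc Q ones (bern_mx R w) + 2 * \sum_a \sum_b Q a b.
Proof.
have hy : 0 <= Lc Q ones (bern_mx R w) + 2 * \sum_a \sum_b Q a b.
  rewrite /Lc mulr_sumr -big_split /=; apply: sumr_ge0 => a _.
  rewrite mulr_sumr -big_split /=; apply: sumr_ge0 => b _.
  have := bern01 w a b; have := hQ01 a b.
  have -> : ones a b = 1 by rewrite mxE.
  move=> /andP[q0 q1] /andP[a0 a1]; lra.
rewrite -ler_pdivlMl ?Nsq_gt0 //.
apply: bigmax_le => [|pi]; first by apply: mulr_ge0 => //; rewrite invr_ge0 ltW ?Nsq_gt0.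
rewrite ler_pdivlMl ?Nsq_gt0 //.
apply: le_trans (norm_le _ _) _.
rewrite /Lc mulr_sumr -big_split /=; apply: ler_sum => a _.
rewrite mulr_sumr -big_split /=; apply: ler_sum => b _.
have := bern01 w a b; have := hQ01 a b.
  have -> : ones a b = 1 by rewrite mxE.
move=> /andP[q0 q1] /andP[a0 a1].
by rewrite ler_norml; apply/andP; split; lra.
Qed.

Lemma eps_big w x : 0 <= x -> x < cut_eps k Q (bern_mx R w) ->
  exists pi : {ffun 'I_n -> 'I_k}, x < norm1 (blockavg (bern_mx R w) pi - blockavg Q pi).
Proof.
move=> x0 hx.
have [/existsP e|/existsPn h] :=
  boolP [exists pi : {ffun 'I_n -> 'I_k}, x < norm1 (blockavg (bern_mx R w) pi - blockavg Q pi)].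
  exact: e.
have : cut_eps k Q (bern_mx R w) <= x.
  by apply: bigmax_le => // pi; rewrite leNgt; apply: h.
by rewrite leNgt hx.
Qed.
End Det.

Unset Implicit Arguments. Set Strict Implicit. Set Printing Implicit Defensive.

Lemma finB {R : realType} (N L K2 : R) : 0 <= N -> 0 <= N * L -> 0 <= K2 ->
  - (8/3 * (N * (1 + L) + K2)) + 4/9 * (N * (1 + L) + K2) + K2 + N * L <= - N.
Proof. move=> h1 h2 h3; nra. Qed.

Theorem lemmaB2 (R : realType) (n k : nat) (hk1 : (1 <= k)%N) (hkn : (k <= n)%N)
  (Q : 'M[R]_n)
  (hsym : Q^T = Q)
  (hQ01 : forall i j, 0 <= Q i j <= 1)
  (hdiag : forall i, Q i i = 0) :
  let bound := rho Q * ((1 + ln (k%:R : R)) / n%:R + (k%:R ^+ 2) / (n%:R ^+ 2)) in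
  bern_E Q (fun A => cut_eps k Q A) <= 9 * Num.sqrt bound /\
  (1 <= n%:R * rho Q ->
     1 - expR (- n%:R) <= bern_P Q (fun A => cut_eps k Q A <= 8 * Num.sqrt bound)).
Proof.
move=> bound.
have hn : (0 < n)%N by apply: leq_trans hkn.
set N : R := n%:R.
have N0 : 0 < N by rewrite ltr0n.
have N1 : 1 <= N by rewrite ler1n.
set K : R := k%:R.
have K1 : 1 <= K by rewrite ler1n.
have lnK0 : 0 <= ln K by apply: ln_ge0.
set S := \sum_a \sum_b Q a b.
have S0 : 0 <= S.
  by apply: sumr_ge0 => a _; apply: sumr_ge0 => b _; have /andP[] := hQ01 a b.
set r := rho Q.
have SE : S = N^+2 * r.
  by rewrite /r /rho mulrA mulfV ?mul1r // gt_eqF // exprn_gt0.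
have r0 : 0 <= r.
  have : 0 <= N^+2 * r by rewrite -SE.
  by rewrite pmulr_rge0 // exprn_gt0.
set B := (1 + ln K) / N + K^+2 / N^+2.
have boundE : bound = r * B by [].
have B1 : 1 / N <= B.
  rewrite /B; have : 0 <= K^+2 / N^+2 by apply: divr_ge0; apply: sqr_ge0.
  have : 1 / N <= (1 + ln K) / N by apply: ler_wpM2r; [rewrite invr_ge0 ltW | lra].
  lra.
have B0 : 0 < B by apply: lt_le_trans B1; rewrite divr_gt0.
set s := Num.sqrt r.
set b := Num.sqrt B.
have sqb : Num.sqrt bound = s * b by rewrite boundE sqrtrM.
have ss : s^+2 = r by rewrite sqr_sqrtr.
have bb : b^+2 = B by rewrite sqr_sqrtr // ltW.
have s0 : 0 <= s by apply: sqrtr_ge0.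
have b0 : 0 < b by rewrite sqrtr_gt0.
have NB : N^+2 * B = N * (1 + ln K) + K^+2.
  by rewrite /B; field; rewrite gt_eqF.
rewrite sqb.
set x := 8 * (s * b).
have x0 : 0 <= x by rewrite /x; apply: mulr_ge0 => //; apply: mulr_ge0 => //; exact: ltW.
have tail : forall (P : pred {ffun 'I_n * 'I_n -> bool}) (G : {ffun 'I_n * 'I_n -> bool} -> R),
    (forall w, 0 <= G w) -> (forall w, P w -> 1 <= G w) ->
    \sum_(w | P w) bern_weight Q w <= \sum_w bern_weight Q w * G w.
  move=> P G G0 G1; rewrite big_mkcond; apply: ler_sum => w _.
  case: ifP => h; last by apply: mulr_ge0; [exact: weight_ge0|].
  by rewrite -{1}(mulr1 (bern_weight Q w)) ler_wpM2l ?weight_ge0 ?G1.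
have hT : 1 <= N * r ->
    \sum_(w | ~~ (cut_eps k Q (bern_mx R w) <= x)) bern_weight Q w <= expR (- N).
  move=> hr.
  have rpos : 0 < r.
    rewrite lt0r r0 andbT; apply/eqP => h0; move: hr; rewrite h0 mulr0 ler10 //.
  have spos : 0 < s by rewrite sqrtr_gt0.
  have sbN : 1 <= N * (s * b).
    have h2 : (N * (s * b))^+2 = (N * r) * (N * B) by rewrite -ss -bb; ring.
    have h3 : 1 <= N * B by rewrite -(@ler_pM2l _ (N^-1)) ?invr_gt0 // mulr1 mulKf ?gt_eqF // -[N^-1]mul1r.
    have h4 : 1 <= (N * r) * (N * B) by nra.
    have h5 : 0 <= N * (s * b) by apply: mulr_ge0; [exact: ltW | apply: mulr_ge0 => //; exact: ltW].
    nra.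
  case: (lerP (3 * r) (4 * (s * b))) => hcase.
  - (* small rho regime: use the global statistic *)
    pose G (w : {ffun 'I_n * 'I_n -> bool}) :=
      expR (1/4 * (Lc Q (ones n) (bern_mx R w) - N^+2 * (x - 2 * r))).
    apply: le_trans (tail _ G _ _) _.
    + by move=> w; apply: expR_ge0.
    + move=> w /=; rewrite -ltNge => hw.
      have e := eps_lin k hQ01 hn w.
      have h1 : N^+2 * x < N^+2 * cut_eps k Q (bern_mx R w) by rewrite ltr_pM2l // exprn_gt0.
      apply: le_trans (expR_ge1Dx _); rewrite lerDl.
      rewrite -/S SE in e.
      apply: mulr_ge0; first by rewrite divr_ge0.
      lra.
    + have -> : \sum_w bern_weight Q w * G w = expR (- (1/4 * (N^+2 * (x - 2 * r)))) *
          \sum_w bern_weight Q w * expR (1/4 * Lc Q (ones n) (bern_mx R w)).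
        rewrite mulr_sumr; apply: eq_bigr => w _; rewrite /G [RHS]mulrCA -expRD; congr (_ * expR _).
        ring.
      apply: le_trans (ler_wpM2l (expR_ge0 _) (mgf hsym hQ01 hdiag (@ones_bound _ n) _)) _.
        by rewrite /=; lra.
      rewrite -expRD ler_expR -/S SE.
      have h1 : N^+2 * (3 * r) <= N^+2 * (4 * (s * b)) by rewrite ler_wpM2l // exprn_ge0 // ltW.
      have h2 : N * 1 <= N * (N * (s * b)) by rewrite ler_wpM2l // ltW.
      rewrite /x; nra.
  - (* union bound over partitions and sign patterns *)
    set lam := b / (3 * s).
    have lam0 : 0 <= lam by rewrite /lam; apply: divr_ge0; [exact: ltW | apply: mulr_ge0].
    have hbs : 4 * b <= 3 * s.
      rewrite -(@ler_pM2l _ s) //; rewrite -ss in hcase; nra.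
    have lam1 : lam <= 1/4.
      rewrite /lam ler_pdivrMr ?mulr_gt0 //; lra.
    pose G (w : {ffun 'I_n * 'I_n -> bool}) :=
      \sum_(pi : {ffun 'I_n -> 'I_k}) \sum_(sg : {ffun 'I_k * 'I_k -> bool})
        expR (lam * (Lc Q (cm pi sg) (bern_mx R w) - N^+2 * x)).
    apply: le_trans (tail _ G _ _) _.
    + by move=> w; apply: sumr_ge0 => pi _; apply: sumr_ge0 => sg _; apply: expR_ge0.
    + move=> w /=; rewrite -ltNge => hw.
      have [pi hpi] := eps_big x0 hw.
      have e := norm_eq Q hn (bern_mx R w) pi.
      set sg := sstar pi (bern_mx R w) Q in e.
      have t1 : 1 <= expR (lam * (Lc Q (cm pi sg) (bern_mx R w) - N^+2 * x)).
        apply: le_trans (expR_ge1Dx _); rewrite lerDl; apply: mulr_ge0 => //.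
        rewrite -e subr_ge0 ler_pM2l ?exprn_gt0 //; exact: ltW.
      apply: le_trans t1 _.
      rewrite /G (bigD1 pi) //= (bigD1 sg) //= -addrA lerDl.
      apply: addr_ge0; first by apply: sumr_ge0 => ? _; apply: expR_ge0.
      by apply: sumr_ge0 => ? _; apply: sumr_ge0 => ? _; apply: expR_ge0.
    + set C := expR (- (lam * (N^+2 * x)) + 4 * lam^+2 * S).
      have -> : \sum_w bern_weight Q w * G w =
          \sum_(pi : {ffun 'I_n -> 'I_k}) \sum_(sg : {ffun 'I_k * 'I_k -> bool})
             \sum_w bern_weight Q w * expR (lam * (Lc Q (cm pi sg) (bern_mx R w) - N^+2 * x)).
        rewrite /G; under eq_bigr do rewrite mulr_sumr.
        under eq_bigr do under eq_bigr do rewrite mulr_sumr.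
        rewrite exchange_big; apply: eq_bigr => pi _.
        by rewrite exchange_big.
      apply: (@le_trans _ _ (\sum_(pi : {ffun 'I_n -> 'I_k}) \sum_(sg : {ffun 'I_k * 'I_k -> bool}) C)).
        apply: ler_sum => pi _; apply: ler_sum => sg _.
        have -> : \sum_w bern_weight Q w * expR (lam * (Lc Q (cm pi sg) (bern_mx R w) - N^+2 * x)) =
            expR (- (lam * (N^+2 * x))) * \sum_w bern_weight Q w * expR (lam * Lc Q (cm pi sg) (bern_mx R w)).
          rewrite mulr_sumr; apply: eq_bigr => w _; rewrite [RHS]mulrCA -expRD; congr (_ * expR _).
          ring.
        rewrite /C expRD; apply: ler_wpM2l; first exact: expR_ge0.
        apply: mgf => //; [exact: cm_bound | by rewrite lam0 lam1].
      rewrite !sumr_const !card_ffun !card_prod card_bool !card_ord.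
      rewrite -mulr_natr -(mulr_natr C) !natrX.
      have e2 : (2%:R : R)^+(k*k) <= expR ((k * k)%:R).
        rewrite -[X in expR X]mulr1 expRM_natl; apply: lerXn2r; rewrite ?nnegrE ?ler0n ?expR_ge0 //.
        by have := expR_ge1Dx (1 : R); rewrite (_ : 1 + 1 = 2%:R) //.
      have e3 : (k%:R : R)^+n = expR (N * ln K).
        by rewrite expRM_natl lnK // posrE; apply: lt_le_trans K1.
      rewrite e3.
      have hC0 : 0 <= C by apply: expR_ge0.
      apply: le_trans (ler_wpM2r (expR_ge0 _) (ler_wpM2l hC0 e2)) _.
      rewrite /C -!expRD ler_expR natrM -expr2 -/K.
      have e1 : lam * (N^+2 * x) = 8/3 * (N^+2 * B).
        by rewrite /lam /x -bb; field; rewrite gt_eqF.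
      have e4 : 4 * lam^+2 * S = 4/9 * (N^+2 * B).
        by rewrite /lam SE -ss -bb; field; rewrite gt_eqF.
      rewrite e1 e4 NB.
      apply: finB; [exact: ltW | exact: mulr_ge0 (ltW N0) lnK0 | exact: sqr_ge0].
have sbN : 1 <= N * r -> 1 <= N * (s * b).
  move=> hr.
  have h2 : (N * (s * b))^+2 = (N * r) * (N * B) by rewrite -ss -bb; ring.
  have h3 : 1 <= N * B by rewrite -(@ler_pM2l _ (N^-1)) ?invr_gt0 // mulr1 mulKf ?gt_eqF // -[N^-1]mul1r.
  have h4 : 1 <= (N * r) * (N * B) by nra.
  have h5 : 0 <= N * (s * b) by apply: mulr_ge0; [exact: ltW | apply: mulr_ge0 => //; exact: ltW].
  nra.
split.
- rewrite /bern_E.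
  case: (lerP 1 (N * r)) => hr.
  + apply: (@le_trans _ _ (\sum_w bern_weight Q w * x +
        \sum_(w | ~~ (cut_eps k Q (bern_mx R w) <= x)) bern_weight Q w)).
      rewrite [X in _ <= _ + X]big_mkcond -big_split /=; apply: ler_sum => w _.
      have e1 := eps_le1 k hQ01 hn w; have w0 := weight_ge0 hQ01 w.
      case: ifP => h.
        rewrite -[X in _ <= _ + X]mulr1 -mulrDr; apply: ler_wpM2l => //; lra.
      by rewrite addr0; apply: ler_wpM2l => //; move/negbFE: h.
    rewrite -mulr_suml weight_sum1 mul1r.
    have hT' := hT hr.
    have hsb := sbN hr.
    have he : expR (- N) <= s * b.
      rewrite expRN.
      have hN : N <= expR N by apply: le_trans (expR_ge1Dx N); lra.
      apply: (@le_trans _ _ (N^-1)); first by rewrite lef_pV2 ?posrE ?expR_gt0.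
      by rewrite -(@ler_pM2l _ N) // mulfV ?gt_eqF.
    rewrite /x; lra.
  + set lam := 1 / (4 * N).
    set E := \sum_w bern_weight Q w * Lc Q (ones n) (bern_mx R w).
    have r1 : r < 1.
      have : N * r < N * 1 by lra.
      by rewrite ltr_pM2l.
    have hkey : lam * E <= expR (4 * lam^+2 * S) - 1.
      rewrite /E mulr_sumr.
      apply: (@le_trans _ _ (\sum_w (bern_weight Q w * expR (lam * Lc Q (ones n) (bern_mx R w)) - bern_weight Q w))).
        apply: ler_sum => w _; rewrite mulrCA -[X in _ <= _ - X]mulr1 -mulrBr.
        apply: (ler_wpM2l (weight_ge0 hQ01 w)).
        have := expR_ge1Dx (lam * Lc Q (ones n) (bern_mx R w)); lra.
      rewrite sumrB weight_sum1 lerD2r.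
      apply: mgf => //; first exact: ones_bound.
      rewrite /lam; apply/andP; split; first by rewrite divr_ge0 // mulr_ge0 // ltW.
      by rewrite ler_pdivrMr ?mulr_gt0 //; lra.
    have hy : 4 * lam^+2 * S = r / 4 by rewrite /lam SE; field; rewrite gt_eqF.
    rewrite hy in hkey.
    have hexp : expR (r / 4) <= 1 + r / 4 + 2 * (r / 4)^+2 by apply: exp_le2; lra.
    have hE1 : E = 4 * N * (lam * E) by rewrite /lam; field; rewrite gt_eqF.
    have hE : E <= 4 * N * (r / 4 + 2 * (r / 4)^+2).
      rewrite {1}hE1; apply: ler_wpM2l; first by apply: mulr_ge0 => //; exact: ltW.
      lra.
    have hE2 : E <= 2 * N * r.
      apply: le_trans hE _.
      have : r / 4 + 2 * (r / 4) ^+ 2 <= r / 2 by nra.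
      move=> h; have := ler_wpM2l (x := 4 * N) _ h.
      have -> : 4 * N * (r / 2) = 2 * N * r by field.
      apply; apply: mulr_ge0 => //; exact: ltW.
    apply: (@le_trans _ _ (\sum_w bern_weight Q w * ((N^+2)^-1 * (Lc Q (ones n) (bern_mx R w) + 2 * S)))).
      apply: ler_sum => w _; apply: (ler_wpM2l (weight_ge0 hQ01 w)).
      rewrite ler_pdivlMl ?exprn_gt0 //; exact: eps_lin.
    have -> : \sum_w bern_weight Q w * ((N^+2)^-1 * (Lc Q (ones n) (bern_mx R w) + 2 * S)) =
        (N^+2)^-1 * (E + 2 * S).
      have -> : \sum_w bern_weight Q w * ((N^+2)^-1 * (Lc Q (ones n) (bern_mx R w) + 2 * S)) =
         \sum_w ((N^+2)^-1 * (bern_weight Q w * Lc Q (ones n) (bern_mx R w)) +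
                  bern_weight Q w * ((N^+2)^-1 * (2 * S))).
        by apply: eq_bigr => w _; ring.
      by rewrite big_split /= -mulr_suml weight_sum1 mul1r mulrDr; congr (_ + _); rewrite /E mulr_sumr.
    have hrB : r <= B.
      apply: le_trans B1; apply: ltW; rewrite ltr_pdivlMr // mulrC; lra.
    have hsb : s <= b by rewrite ler_sqrt // ltW.
    apply: (@le_trans _ _ (4 * r)).
      rewrite ler_pdivrMl ?exprn_gt0 // SE.
      have : N * r <= N^+2 * r by rewrite ler_wpM2r // expr2 ler_peMl // ltW.
      lra.
    rewrite -ss.
    have : s * s <= s * b by rewrite ler_wpM2l.
    have : 0 <= s * b by apply: mulr_ge0 => //; exact: ltW.
    rewrite expr2; lra.
- move=> hr; rewrite /bern_P.
  have h1 := weight_sum1 Q.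
  rewrite (bigID (fun w => cut_eps k Q (bern_mx R w) <= x)) /= in h1.
  have := hT hr; lra.
Qed.
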